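(* For all integers $t\ge0$ and $k\ge0$, \[\kappa_2(2^{k+1}t+2^k-1)=\frac{(2^k+1)\kappa_2(t)}{2^{k+1}}+\frac{(2^k-1)\kappa_2(t+1)}{2^{k+1}}+\frac{3(2^k-1)}{2^k},\] and \[D(2^{k+1}t+2^k-1)=\frac{2^k+1}{2^{k+1}}D(t)+\frac{2^k-1}{2^{k+1}}D(t+1)+\Bigl(\frac12+\frac{k-1}{2^{k+1}}\Bigr)\bigl(\kappa_2(t+1)-\kappa_2(t)\bigr)+1+\frac{3k-1}{2^k}.\]
   Context: $s(n)$ is the number of $1$s in the binary expansion of $n\ge0$; $\delta(j,t)=\lim_{N\to\infty}\frac1N|\{0\le n<N: s(n+t)-s(n)=j\}|$ for $j\in\mathbb Z$, a probability distribution on $\mathbb Z$, and $\kappa_j(t)$ denotes its $j$-th cumulant ($\log\sum_k\delta(k,t)e^{2\pi ik\vartheta}=\sum_{j\ge0}\frac{\kappa_j(t)}{j!}(2\pi i\vartheta)^j$ near $\vartheta=0$). Set $D(t)=\kappa_2(t)-\kappa_3(t)/3$. *)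

(* Defs.v *)
From Stdlib Require Import Reals Lia ZArith List.
From Coquelicot Require Import Coquelicot.
Open Scope R_scope.

(* Binary digit sum s(n): number of 1s in the binary expansion of n.
   The fuel argument (= n) is always sufficient. *)
Fixpoint bits_fuel (fuel n : nat) : nat :=
  match fuel with
  | O => O
  | S f => match n with
           | O => O
           | _ => Nat.modulo n 2 + bits_fuel f (Nat.div n 2)
           end
  end.
Definition s (n : nat) : nat := bits_fuel n n.

Definition count_eq (j : Z) (t N : nat) : nat :=
  length (filter (fun n => Z.eqb (Z.of_nat (s (n + t)) - Z.of_nat (s n)) j)
                 (seq 0 N)).

Definition delta (j : Z) (t : nat) : R :=
  real (Lim_seq (fun N => INR (count_eq j t N) / INR N)).

Definition moment (t p : nat) : R :=
  Series (fun n => delta (Z.of_nat n) t * INR n ^ p)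
  + Series (fun n => delta (- Z.of_nat (S n))%Z t * (- INR (S n)) ^ p).

Fixpoint rsum (n : nat) (f : nat -> R) : R :=
  match n with
  | O => 0
  | S n' => rsum n' f + f n'
  end.

(* Cumulants of a moment sequence m (m p = sum_k delta(k) k^p), i.e. the
   coefficients kappa_j of  log (sum_p m_p x^p / p!) = sum_j kappa_j x^j / j!
   (x = 2 pi i theta).  Extracting coefficients of phi' = phi * (log phi)'
   gives  m_{n+1} = sum_{k=0}^{n} C(n,k) kappa_{k+1} m_{n-k},  and
   kappa_0 = ln m_0.  cumul_upto m n returns a function agreeing with
   kappa_k for all k <= n. *)
Fixpoint cumul_upto (m : nat -> R) (n : nat) : nat -> R :=
  match n with
  | O => fun _ => ln (m O)
  | S n' =>
      let f := cumul_upto m n' in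
      fun k => if Nat.leb k n' then f k
               else (m (S n') - rsum n' (fun i => Binomial.C n' i * f (S i) * m (n' - i)%nat))
                    / m O
  end.

Definition cumulant (m : nat -> R) (j : nat) : R := cumul_upto m j j.

Definition kappa (j t : nat) : R := cumulant (moment t) j.

Definition Dfun (t : nat) : R := kappa 2 t - kappa 3 t / 3.

(* Main.v *)
Require Import Defs.
From Stdlib Require Import Reals Lia ZArith List Lra.
From Coquelicot Require Import Coquelicot.
Open Scope R_scope.

Lemma bits_fuel_indep : forall f g n, (n <= f)%nat -> (n <= g)%nat -> bits_fuel f n = bits_fuel g n.
Proof.
  induction f as [|f IH]; intros g n Hf Hg.
  - assert (n = 0%nat) by lia; subst. destruct g; reflexivity.
  - destruct g as [|g]. { assert (n = 0%nat) by lia; subst; reflexivity. }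
    destruct n as [|n']; [reflexivity|]. cbn [bits_fuel].
    f_equal. apply IH.
    + assert (Nat.div (S n') 2 < S n')%nat by (apply Nat.div_lt; lia). lia.
    + assert (Nat.div (S n') 2 < S n')%nat by (apply Nat.div_lt; lia). lia.
Qed.

Lemma bits_fuel_S : forall f n, bits_fuel (S f) (S n) = (Nat.modulo (S n) 2 + bits_fuel f (Nat.div (S n) 2))%nat.
Proof. reflexivity. Qed.

Lemma s_double : forall m, s (2 * m) = s m.
Proof.
  intros [|m]; [reflexivity|].
  unfold s. replace (2 * S m)%nat with (S (2 * m + 1)) by lia.
  rewrite bits_fuel_S.
  replace (Nat.modulo (S (2*m+1)) 2) with 0%nat.
  2:{ replace (S (2*m+1)) with (S m * 2)%nat by lia. rewrite Nat.Div0.mod_mul. reflexivity. }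
  replace (Nat.div (S (2*m+1)) 2) with (S m).
  2:{ replace (S (2*m+1)) with (S m * 2)%nat by lia. rewrite Nat.div_mul; lia. }
  simpl plus. fold (s (S m)). unfold s. apply bits_fuel_indep; lia.
Qed.

Lemma s_double1 : forall m, s (2 * m + 1) = S (s m).
Proof.
  intros m. unfold s. replace (2 * m + 1)%nat with (S (2 * m)) by lia.
  destruct m as [|m]; [reflexivity|].
  replace (S (2 * S m)) with (S (S (2*m+1))) by lia. rewrite bits_fuel_S.
  replace (S (S (2*m+1))) with (S (2 * S m)) by lia.
  replace (Nat.modulo (S (2*S m)) 2) with 1%nat.
  2:{ replace (S (2*S m)) with (1 + S m * 2)%nat by lia. rewrite Nat.Div0.mod_add. reflexivity. }
  replace (Nat.div (S (2*S m)) 2) with (S m).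
  2:{ replace (S (2*S m)) with (1 + S m * 2)%nat by lia. rewrite Nat.div_add; simpl; lia. }
  replace (2 * S m)%nat with (S (2*m+1)) by lia. cbn [Nat.add]. f_equal. apply bits_fuel_indep; lia.
Qed.

Definition dZ (t n : nat) : Z := (Z.of_nat (s (n + t)) - Z.of_nat (s n))%Z.
Definition ind (j : Z) (t n : nat) : nat := if Z.eqb (dZ t n) j then 1%nat else 0%nat.

Lemma count_S : forall j t N, count_eq j t (S N) = (count_eq j t N + ind j t N)%nat.
Proof.
  intros. unfold count_eq. rewrite seq_S, filter_app, length_app. simpl.
  unfold ind, dZ. destruct (Z.eqb _ j); reflexivity.
Qed.

Lemma count_0 : forall j t, count_eq j t 0 = 0%nat.
Proof. reflexivity. Qed.

Lemma ind_le1 : forall j t n, (ind j t n <= 1)%nat.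
Proof. intros; unfold ind; destruct (Z.eqb _ _); lia. Qed.

Lemma dZ_ee : forall t m, dZ (2*t) (2*m) = dZ t m.
Proof. intros; unfold dZ. replace (2*m+2*t)%nat with (2*(m+t))%nat by lia. rewrite !s_double; reflexivity. Qed.
Lemma dZ_eo : forall t m, dZ (2*t) (2*m+1) = dZ t m.
Proof. intros; unfold dZ. replace (2*m+1+2*t)%nat with (2*(m+t)+1)%nat by lia. rewrite !s_double1; lia. Qed.
Lemma dZ_oe : forall t m, dZ (2*t+1) (2*m) = (dZ t m + 1)%Z.
Proof. intros; unfold dZ. replace (2*m+(2*t+1))%nat with (2*(m+t)+1)%nat by lia. rewrite s_double1, s_double; lia. Qed.
Lemma dZ_oo : forall t m, dZ (2*t+1) (2*m+1) = (dZ (t+1) m - 1)%Z.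
Proof. intros; unfold dZ. replace (2*m+1+(2*t+1))%nat with (2*(m+(t+1)))%nat by lia. rewrite s_double1, s_double; lia. Qed.

Lemma ind_shift : forall d j a, (if Z.eqb (d + a) j then 1 else 0)%nat = (if Z.eqb d (j - a) then 1 else 0)%nat.
Proof. intros. destruct (Z.eqb_spec (d+a) j), (Z.eqb_spec d (j-a)); lia. Qed.

Lemma count_even : forall j t N, count_eq j (2*t) (2*N) = (count_eq j t N + count_eq j t N)%nat.
Proof.
  intros j t N. induction N as [|N IH]; [reflexivity|].
  replace (2 * S N)%nat with (S (S (2*N))) by lia.
  rewrite !count_S, IH. replace (S (2*N)) with (2*N+1)%nat by lia.
  unfold ind. rewrite dZ_ee, dZ_eo. lia.
Qed.

Lemma count_odd : forall j t N, count_eq j (2*t+1) (2*N) = (count_eq (j-1) t N + count_eq (j+1) (t+1) N)%nat.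
Proof.
  intros j t N. induction N as [|N IH]; [reflexivity|].
  replace (2 * S N)%nat with (S (S (2*N))) by lia.
  rewrite !count_S, IH. replace (S (2*N)) with (2*N+1)%nat by lia.
  unfold ind. rewrite dZ_oe, dZ_oo, ind_shift.
  replace (dZ (t+1) N - 1)%Z with (dZ (t+1) N + (-1))%Z by lia. rewrite ind_shift.
  replace (j - -1)%Z with (j+1)%Z by lia. lia.
Qed.

Lemma count_zero_t : forall j N, count_eq j 0 N = if Z.eqb j 0 then N else 0%nat.
Proof.
  intros j N. induction N as [|N IH]; [destruct (Z.eqb j 0); reflexivity|].
  rewrite count_S, IH. unfold ind, dZ. rewrite Nat.add_0_r, Z.sub_diag.
  destruct (Z.eqb_spec 0 j), (Z.eqb_spec j 0); lia.
Qed.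

Lemma frac_le1 : forall A Q, 0 < Q -> 0 <= A <= Q -> 0 <= A / Q <= 1.
Proof.
  intros A Q HQ [H1 H2]. unfold Rdiv. split.
  - apply Rmult_le_pos; [lra| left; apply Rinv_0_lt_compat; lra].
  - rewrite <- (Rinv_r Q) by lra. apply Rmult_le_compat_r; [left; apply Rinv_0_lt_compat; lra| lra].
Qed.

Lemma odd_bound : forall A B Q, 0 < Q -> 0 <= A <= Q -> A <= B <= A + 1 ->
  Rabs (B / (Q + 1) - A / Q) <= / (Q + 1).
Proof.
  intros A B Q HQ HA HB.
  assert (Heq : B / (Q + 1) - A / Q = (B - A - A / Q) * / (Q + 1)) by (field; lra).
  rewrite Heq, Rabs_mult, (Rabs_pos_eq (/ (Q+1))) by (left; apply Rinv_0_lt_compat; lra).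
  rewrite <- (Rmult_1_l (/ (Q+1))) at 2.
  apply Rmult_le_compat_r; [left; apply Rinv_0_lt_compat; lra|].
  pose proof (frac_le1 A Q HQ HA). apply Rabs_le. lra.
Qed.

Lemma abs_le_inv : forall x y, Rabs x <= y -> -y <= x <= y.
Proof. intros x y H. pose proof (Rle_abs x). pose proof (Rle_abs (-x)). rewrite Rabs_Ropp in *. lra. Qed.

Lemma is_lim_inv_n : is_lim_seq (fun n => / INR n) 0.
Proof.
  replace (Finite 0) with (Rbar_inv p_infty) by reflexivity.
  apply is_lim_seq_inv. apply is_lim_seq_INR. discriminate.
Qed.

Lemma LL : forall (a : nat -> nat) (L : R), a 0%nat = 0%nat ->
  (forall N, (a N <= a (S N) <= S (a N))%nat) ->
  is_lim_seq (fun N => INR (a (2*N)%nat) / INR (2*N)) L ->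
  is_lim_seq (fun N => INR (a N) / INR N) L.
Proof.
  intros a L H0 Hs Hev.
  assert (HaN : forall N, (a N <= N)%nat).
  { induction N; [lia|]. specialize (Hs N). lia. }
  set (w := fun n => INR (a (2*(n/2))%nat) / INR (2*(n/2))).
  assert (Hw : is_lim_seq w L).
  { unfold w. apply (is_lim_seq_subseq (fun N => INR (a (2*N)%nat) / INR (2*N)) L (fun n => (n/2)%nat)); [|exact Hev].
    intros P [N HN]. exists (2*N)%nat. intros n Hn. apply HN.
    apply Nat.div_le_lower_bound; lia. }
  assert (Hd : is_lim_seq (fun n => INR (a n) / INR n - w n) 0).
  { apply is_lim_seq_le_le_loc with (u := fun n => - / INR n) (w := fun n => / INR n).
    - exists 2%nat. intros n Hn. apply abs_le_inv.
      unfold w. destruct (Nat.Even_or_Odd n) as [[q Hq]|[q Hq]]; subst n.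
      + replace ((2*q)/2)%nat with q by (rewrite Nat.mul_comm, Nat.div_mul; lia).
        unfold Rminus. rewrite Rplus_opp_r, Rabs_R0. left; apply Rinv_0_lt_compat, lt_0_INR; lia.
      + replace ((2*q+1)/2)%nat with q.
        2:{ replace (2*q+1)%nat with (1 + q*2)%nat by lia. rewrite Nat.div_add by lia. reflexivity. }
        rewrite (plus_INR (2*q) 1). simpl (INR 1).
        apply odd_bound.
        * apply lt_0_INR; lia.
        * split; [apply pos_INR| apply le_INR, HaN].
        * specialize (Hs (2*q)%nat). replace (2*q+1)%nat with (S (2*q)) by lia.
          split; [apply le_INR; lia|]. rewrite <- S_INR. apply le_INR; lia.
    - replace (Finite 0) with (Rbar_opp 0) by (simpl; f_equal; ring).
      apply (is_lim_seq_opp (fun n => / INR n) 0). apply is_lim_inv_n.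
    - apply is_lim_inv_n. }
  apply is_lim_seq_ext with (u := fun n => w n + (INR (a n) / INR n - w n)).
  { intros; ring. }
  replace L with (L + 0) by ring. apply is_lim_seq_plus'; assumption.
Qed.

Definition HasLim (j : Z) (t : nat) (L : R) :=
  is_lim_seq (fun N => INR (count_eq j t N) / INR N) L.

Lemma count_mono : forall j t N, (count_eq j t N <= count_eq j t (S N) <= S (count_eq j t N))%nat.
Proof. intros. rewrite count_S. pose proof (ind_le1 j t N). lia. Qed.

Lemma HL_eq : forall j t L L', L = L' -> HasLim j t L -> HasLim j t L'.
Proof. intros; subst; auto. Qed.

Lemma HL_even : forall j t L, HasLim j t L -> HasLim j (2*t) L.
Proof.
  intros j t L H. unfold HasLim. apply LL; [reflexivity| apply count_mono|].
  eapply is_lim_seq_ext_loc; [|exact H].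
  exists 1%nat. intros N HN. rewrite count_even, plus_INR, mult_INR. simpl (INR 2).
  assert (0 < INR N) by (apply lt_0_INR; lia). field. lra.
Qed.

Lemma HL_odd : forall j t L1 L2, HasLim (j-1) t L1 -> HasLim (j+1) (t+1) L2 ->
  HasLim j (2*t+1) ((L1 + L2) / 2).
Proof.
  intros j t L1 L2 H1 H2. unfold HasLim. apply LL; [reflexivity| apply count_mono|].
  eapply is_lim_seq_ext_loc.
  2:{ apply is_lim_seq_mult'. apply is_lim_seq_plus'. exact H1. exact H2. apply is_lim_seq_const. }
  exists 1%nat. intros N HN. cbv beta. rewrite count_odd, plus_INR, mult_INR. simpl (INR 2).
  assert (0 < INR N) by (apply lt_0_INR; lia). field. lra.
Qed.

Lemma HL0 : forall j, HasLim j 0 (if Z.eqb j 0 then 1 else 0).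
Proof.
  intros j. unfold HasLim. eapply is_lim_seq_ext_loc; [|apply is_lim_seq_const].
  exists 1%nat. intros N HN. rewrite count_zero_t.
  assert (0 < INR N) by (apply lt_0_INR; lia).
  destruct (Z.eqb j 0); simpl; field; lra.
Qed.

Lemma s_succ_le : forall n, (s (S n) <= S (s n))%nat.
Proof.
  assert (forall n m, (m <= n)%nat -> (s (S m) <= S (s m))%nat).
  { induction n as [|n IH]; intros m Hm.
    - assert (m = 0%nat) by lia. subst. vm_compute. lia.
    - destruct (Nat.Even_or_Odd m) as [[q Hq]|[q Hq]]; subst m.
      + replace (S (2*q)) with (2*q+1)%nat by lia. rewrite s_double1, s_double. lia.
      + replace (S (2*q+1)) with (2*(q+1))%nat by lia. rewrite s_double, s_double1.
        replace (q+1)%nat with (S q) by lia. pose proof (IH q ltac:(lia)). lia. }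
  intros n. apply (H n n). lia.
Qed.

Lemma count1_zero : forall j N, (2 <= j)%Z -> count_eq j 1 N = 0%nat.
Proof.
  intros j N Hj. induction N as [|N IH]; [reflexivity|].
  rewrite count_S, IH. unfold ind, dZ.
  destruct (Z.eqb_spec (Z.of_nat (s (N + 1)) - Z.of_nat (s N)) j); [|reflexivity].
  pose proof (s_succ_le N). replace (N+1)%nat with (S N) in e by lia. lia.
Qed.

Definition d1 (j : Z) : R := if Z.leb j 1 then / 2 ^ (Z.to_nat (2 - j)) else 0.

Lemma HL1 : forall j, HasLim j 1 (d1 j).
Proof.
  intros j. destruct (Z.le_gt_cases j 1) as [Hj|Hj].
  2:{ unfold d1. replace (Z.leb j 1) with false by (symmetry; apply Z.leb_gt; lia).
      unfold HasLim. eapply is_lim_seq_ext; [|apply is_lim_seq_const].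
      intros N. rewrite count1_zero by lia. simpl. unfold Rdiv. ring. }
  replace j with (1 - Z.of_nat (Z.to_nat (1 - j)))%Z by lia.
  generalize (Z.to_nat (1 - j)). clear j Hj. intros n.
  induction n as [|n IH].
  - pose proof (HL_odd 1 0 1 0) as H. simpl in H.
    eapply HL_eq; [|apply H].
    + unfold d1. simpl. field.
    + apply (HL0 0).
    + unfold HasLim. eapply is_lim_seq_ext; [|apply is_lim_seq_const].
      intros N. rewrite count1_zero by lia. simpl. unfold Rdiv. ring.
  - pose proof (HL_odd (1 - Z.of_nat (S n)) 0 0 (d1 (1 - Z.of_nat n))) as H.
    change (2*0+1)%nat with 1%nat in H. change (0+1)%nat with 1%nat in H.
    eapply HL_eq; [|apply H].
    + unfold d1. replace (Z.leb (1 - Z.of_nat (S n)) 1) with true by (symmetry; apply Z.leb_le; lia).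
      replace (Z.leb (1 - Z.of_nat n) 1) with true by (symmetry; apply Z.leb_le; lia).
      replace (Z.to_nat (2 - (1 - Z.of_nat (S n)))) with (S (S n)) by lia.
      replace (Z.to_nat (2 - (1 - Z.of_nat n))) with (S n) by lia.
      simpl. field; repeat split; first [apply pow_nonzero; lra | lra].
    + eapply HL_eq; [|apply HL0]. replace (Z.eqb (1 - Z.of_nat (S n) - 1) 0) with false by (symmetry; apply Z.eqb_neq; lia). reflexivity.
    + replace (1 - Z.of_nat (S n) + 1)%Z with (1 - Z.of_nat n)%Z by lia. exact IH.
Qed.

Lemma HL_delta : forall j t L, HasLim j t L -> delta j t = L.
Proof. intros j t L H. unfold delta. rewrite (is_lim_seq_unique _ _ H). reflexivity. Qed.

Lemma ex_HL : forall t j, exists L, HasLim j t L.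
Proof.
  assert (forall n t, (t <= n)%nat -> forall j, exists L, HasLim j t L).
  { induction n as [|n IH]; intros t Ht j.
    - assert (t = 0%nat) by lia. subst. eexists; apply HL0.
    - destruct (Nat.le_gt_cases t 1) as [H1|H1].
      + destruct t as [|[|t]]; [eexists; apply HL0| eexists; apply HL1| lia].
      + destruct (Nat.Even_or_Odd t) as [[q Hq]|[q Hq]]; subst t.
        * destruct (IH q ltac:(lia) j) as [L HL]. eexists; apply HL_even; eauto.
        * destruct (IH q ltac:(lia) (j-1)%Z) as [L1 H1'].
          destruct (IH (q+1)%nat ltac:(lia) (j+1)%Z) as [L2 H2'].
          eexists; apply HL_odd; eauto. }
  intros t j. apply (H t t). lia.
Qed.

Lemma delta_HL : forall j t, HasLim j t (delta j t).
Proof. intros j t. destruct (ex_HL t j) as [L H]. rewrite (HL_delta _ _ _ H). exact H. Qed.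

Lemma delta_even : forall j t, delta j (2*t) = delta j t.
Proof. intros. apply HL_delta, HL_even, delta_HL. Qed.

Lemma delta_odd : forall j t, delta j (2*t+1) = (delta (j-1) t + delta (j+1) (t+1)) / 2.
Proof. intros. apply HL_delta, HL_odd; apply delta_HL. Qed.

Lemma delta0 : forall j, delta j 0 = if Z.eqb j 0 then 1 else 0.
Proof. intros. apply HL_delta, HL0. Qed.

Lemma delta1 : forall j, delta j 1 = d1 j.
Proof. intros. apply HL_delta, HL1. Qed.

Definition posp (f : Z -> R) := fun n : nat => f (Z.of_nat n).
Definition negp (f : Z -> R) := fun n : nat => f (- Z.of_nat (S n))%Z.
Definition zconv (f : Z -> R) := ex_series (posp f) /\ ex_series (negp f).
Definition zsum (f : Z -> R) := Series (posp f) + Series (negp f).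

Lemma zero_series : is_series (fun _ : nat => 0) 0.
Proof.
  assert (Rabs (/2) < 1) by (rewrite Rabs_pos_eq; lra).
  pose proof (is_series_scal_l 0 _ _ (is_series_geom (/2) H)) as H0.
  assert (E : forall x : R, scal 0 x = 0) by (intros; unfold scal; simpl; unfold mult; simpl; ring).
  rewrite E in H0.
  eapply is_series_ext; [|exact H0].
  intros n. simpl. apply E.
Qed.

Lemma ser_fin0 : forall a : nat -> R, (forall n, a (S n) = 0) -> ex_series a /\ Series a = a 0%nat.
Proof.
  intros a H.
  assert (Hs : ex_series (fun k => a (S k))).
  { eapply ex_series_ext; [|exists 0; apply zero_series]. intros; simpl; rewrite H; reflexivity. }
  assert (He : ex_series a) by (apply ex_series_incr_1; exact Hs).
  split; [exact He|]. rewrite Series_incr_1 by exact He.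
  rewrite (Series_ext _ (fun _ => 0)) by (intros; apply H).
  rewrite (is_series_unique _ _ zero_series). ring.
Qed.

Lemma ex_series_ext' : forall a b : nat -> R, (forall n, a n = b n) -> ex_series a -> ex_series b.
Proof. intros a b H. apply ex_series_ext. exact H. Qed.

Lemma zconv_ext : forall f g, (forall j, f j = g j) -> zconv f -> zconv g.
Proof. intros f g H [H1 H2]. split; [eapply ex_series_ext'; [|exact H1]|eapply ex_series_ext'; [|exact H2]]; intros; unfold posp, negp; apply H. Qed.

Lemma zsum_ext : forall f g, (forall j, f j = g j) -> zsum f = zsum g.
Proof. intros f g H. unfold zsum. f_equal; apply Series_ext; intros; unfold posp, negp; apply H. Qed.

Lemma zconv_plus : forall f g, zconv f -> zconv g -> zconv (fun j => f j + g j).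
Proof.
  intros f g [F1 F2] [G1 G2]. split.
  - eapply ex_series_ext'; [|apply (ex_series_plus _ _ F1 G1)]. intros; reflexivity.
  - eapply ex_series_ext'; [|apply (ex_series_plus _ _ F2 G2)]. intros; reflexivity.
Qed.

Lemma zsum_plus : forall f g, zconv f -> zconv g -> zsum (fun j => f j + g j) = zsum f + zsum g.
Proof.
  intros f g [F1 F2] [G1 G2]. unfold zsum.
  change (posp (fun j => f j + g j)) with (fun n => posp f n + posp g n).
  change (negp (fun j => f j + g j)) with (fun n => negp f n + negp g n).
  rewrite !Series_plus by assumption. ring.
Qed.

Lemma zconv_scal : forall c f, zconv f -> zconv (fun j => c * f j).
Proof.
  intros c f [F1 F2]. split.
  - eapply ex_series_ext'; [|apply (ex_series_scal_l c _ F1)]. intros; reflexivity.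
  - eapply ex_series_ext'; [|apply (ex_series_scal_l c _ F2)]. intros; reflexivity.
Qed.

Lemma zsum_scal : forall c f, zsum (fun j => c * f j) = c * zsum f.
Proof.
  intros c f. unfold zsum.
  change (posp (fun j => c * f j)) with (fun n => c * posp f n).
  change (negp (fun j => c * f j)) with (fun n => c * negp f n).
  rewrite !Series_scal_l. ring.
Qed.

Lemma pos_shift : forall f n, posp (fun j => f (j + 1)%Z) n = posp f (S n).
Proof. intros; unfold posp. f_equal. lia. Qed.
Lemma neg_shift0 : forall f, negp (fun j => f (j + 1)%Z) 0%nat = posp f 0%nat.
Proof. intros; unfold posp, negp. f_equal. Qed.
Lemma neg_shiftS : forall f n, negp (fun j => f (j + 1)%Z) (S n) = negp f n.
Proof. intros; unfold negp. f_equal. lia. Qed.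

Lemma zconv_shift : forall f, zconv f <-> zconv (fun j => f (j + 1)%Z).
Proof.
  intros f. unfold zconv. split; intros [H1 H2]; split.
  - eapply ex_series_ext'; [intros n; symmetry; apply pos_shift|]. apply ex_series_incr_1 in H1. exact H1.
  - apply ex_series_incr_1. eapply ex_series_ext'; [intros n; symmetry; apply neg_shiftS|]. exact H2.
  - apply ex_series_incr_1. eapply ex_series_ext'; [intros n; apply pos_shift|]. exact H1.
  - apply ex_series_incr_1 in H2. eapply ex_series_ext'; [intros n; apply neg_shiftS|]. exact H2.
Qed.

Lemma zsum_shift : forall f, zconv f -> zsum (fun j => f (j + 1)%Z) = zsum f.
Proof.
  intros f Hf. pose proof Hf as [H1 H2]. apply zconv_shift in Hf. destruct Hf as [G1 G2].
  unfold zsum. rewrite (Series_incr_1 (posp f)) by exact H1.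
  rewrite (Series_incr_1 (negp (fun j => f (j + 1)%Z))) by exact G2.
  rewrite neg_shift0.
  rewrite (Series_ext _ (fun k => posp f (S k))) by (intros; apply pos_shift).
  rewrite (Series_ext (fun k => negp (fun j => f (j + 1)%Z) (S k)) (negp f)) by (intros; apply neg_shiftS).
  ring.
Qed.

Definition G (t : nat) := forall q, zconv (fun j => delta j t * IZR j ^ q).

Lemma polyshift : forall t, G t -> forall a q r, zconv (fun j => delta j t * (IZR j + a) ^ q * IZR j ^ r).
Proof.
  intros t Ht a q. induction q as [|q IH]; intros r.
  - eapply zconv_ext; [|apply (Ht r)]. intros j; simpl; ring.
  - eapply zconv_ext; [|apply zconv_plus; [apply (IH (S r))| apply (zconv_scal a), (IH r)]].
    intros j; simpl; ring.
Qed.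

Lemma h1_conv : forall t q, G t -> zconv (fun j => delta (j-1) t * IZR j ^ q).
Proof.
  intros t q Ht. apply zconv_shift.
  eapply zconv_ext; [|apply (polyshift t Ht 1 q 0)].
  intros j. cbv beta. rewrite Z.add_simpl_r, plus_IZR. simpl; ring.
Qed.

Lemma h1_sum : forall t q, G t ->
  zsum (fun j => delta (j-1) t * IZR j ^ q) = zsum (fun j => delta j t * (IZR j + 1) ^ q).
Proof.
  intros t q Ht. rewrite <- zsum_shift by (apply h1_conv; exact Ht).
  apply zsum_ext. intros j. rewrite Z.add_simpl_r, plus_IZR. reflexivity.
Qed.

Lemma h2_conv : forall t q, G t -> zconv (fun j => delta (j+1) t * IZR j ^ q).
Proof.
  intros t q Ht. pose proof (polyshift t Ht (-1) q 0) as H.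
  apply zconv_shift in H. eapply zconv_ext; [|exact H].
  intros j. cbv beta. rewrite plus_IZR. replace (IZR j + IZR 1 + -1) with (IZR j) by (simpl; ring). simpl pow at 2. ring.
Qed.

Lemma h2_sum : forall t q, G t ->
  zsum (fun j => delta (j+1) t * IZR j ^ q) = zsum (fun j => delta j t * (IZR j + -1) ^ q).
Proof.
  intros t q Ht.
  assert (Hc : zconv (fun j => delta j t * (IZR j + -1) ^ q)).
  { eapply zconv_ext; [|apply (polyshift t Ht (-1) q 0)]. intros; simpl; ring. }
  rewrite <- (zsum_shift _ Hc). apply zsum_ext. intros j. rewrite plus_IZR. f_equal. f_equal. ring.
Qed.

Lemma G_odd : forall t, G t -> G (t+1)%nat -> G (2*t+1)%nat.
Proof.
  intros t H1 H2 q.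
  eapply zconv_ext; [|apply zconv_plus; [apply (zconv_scal (/2)), (h1_conv t q H1)| apply (zconv_scal (/2)), (h2_conv (t+1) q H2)]].
  intros j. cbv beta. rewrite delta_odd. unfold Rdiv. ring.
Qed.

Lemma G_even : forall t, G t -> G (2*t)%nat.
Proof. intros t H q. eapply zconv_ext; [|apply (H q)]. intros j; cbv beta; rewrite delta_even; reflexivity. Qed.

Lemma G0 : G 0.
Proof.
  intros q. split.
  - apply ser_fin0. intros n. unfold posp. rewrite delta0.
    replace (Z.eqb (Z.of_nat (S n)) 0) with false by (symmetry; apply Z.eqb_neq; lia). ring.
  - apply ser_fin0. intros n. unfold negp. rewrite delta0.
    replace (Z.eqb (- Z.of_nat (S (S n))) 0) with false by (symmetry; apply Z.eqb_neq; lia). ring.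
Qed.

Lemma lim_pow1 : forall u q, is_lim_seq u 1 -> is_lim_seq (fun n => u n ^ q) 1.
Proof.
  intros u q H. induction q as [|q IH].
  - simpl. apply is_lim_seq_const.
  - simpl. replace 1 with (1 * 1) by ring. apply is_lim_seq_mult'; assumption.
Qed.

Lemma ex_poly_geom : forall q, ex_series (fun n => Rabs (INR (S n) ^ q / 2 ^ n)).
Proof.
  intros q. apply ex_series_DAlembert with (k := / 2); [lra| |].
  - intros n. apply Rgt_not_eq. unfold Rdiv. apply Rmult_lt_0_compat.
    + apply pow_lt. apply lt_0_INR; lia.
    + apply Rinv_0_lt_compat, pow_lt; lra.
  - eapply is_lim_seq_ext.
    { intros n. symmetry.
      assert (E : INR (S (S n)) ^ q / 2 ^ S n / (INR (S n) ^ q / 2 ^ n)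
                  = (INR (S (S n)) / INR (S n)) ^ q * / 2).
      { unfold Rdiv. rewrite Rpow_mult_distr, pow_inv. simpl (2 ^ S n).
        assert (0 < INR (S n)) by (apply lt_0_INR; lia).
        assert (0 < INR (S n) ^ q) by (apply pow_lt; lra).
        assert (0 < 2 ^ n) by (apply pow_lt; lra).
        field. split; lra. }
      rewrite E. apply Rabs_pos_eq. apply Rmult_le_pos; [|lra].
      apply pow_le. unfold Rdiv. apply Rmult_le_pos; [apply pos_INR| left; apply Rinv_0_lt_compat, lt_0_INR; lia]. }
    replace (/2) with (1 * /2) at 1 by ring.
    apply is_lim_seq_mult'; [|apply is_lim_seq_const].
    apply lim_pow1.
    assert (Hl : is_lim_seq (fun n => 1 + / INR (S n)) (1 + 0)).
    { apply is_lim_seq_plus'; [apply is_lim_seq_const| apply (is_lim_seq_incr_1 (fun n => / INR n) 0); apply is_lim_inv_n]. }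
    rewrite Rplus_0_r in Hl. eapply is_lim_seq_ext; [|exact Hl]. intros n. cbv beta.
    assert (0 < INR (S n)) by (apply lt_0_INR; lia).
    rewrite (S_INR (S n)). field. lra.
Qed.

Lemma G1 : G 1.
Proof.
  intros q. split.
  - apply ex_series_incr_1. apply ser_fin0. intros n. unfold posp. rewrite delta1. unfold d1.
    replace (Z.leb (Z.of_nat (S (S n))) 1) with false by (symmetry; apply Z.leb_gt; lia). ring.
  - apply (@ex_series_le R_AbsRing R_CompleteNormedModule) with (b := fun n => Rabs (INR (S n) ^ q / 2 ^ n)); [|apply ex_poly_geom].
    intros n. change (norm (negp (fun j => delta j 1 * IZR j ^ q) n)) with (Rabs (negp (fun j => delta j 1 * IZR j ^ q) n)).
    unfold negp. rewrite delta1. unfold d1.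
    replace (Z.leb (- Z.of_nat (S n)) 1) with true by (symmetry; apply Z.leb_le; lia).
    replace (Z.to_nat (2 - - Z.of_nat (S n))) with (n + 3)%nat by lia.
    rewrite opp_IZR, <- INR_IZR_INZ.
    rewrite !Rabs_mult, <- !RPow_abs, Rabs_Ropp, Rabs_inv, <- RPow_abs.
    unfold Rdiv. rewrite Rabs_mult, Rabs_inv, <- !RPow_abs.
    rewrite (Rabs_pos_eq 2) by lra. rewrite pow_add.
    assert (0 < 2 ^ n) by (apply pow_lt; lra).
    assert (0 <= Rabs (INR (S n)) ^ q) by (apply pow_le, Rabs_pos).
    rewrite Rinv_mult. simpl (2 ^ 3).
    assert (0 < / 2 ^ n) by (apply Rinv_0_lt_compat; lra).
    assert (0 <= Rabs (INR (S n)) ^ q * / 2 ^ n) by (apply Rmult_le_pos; lra).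
    nra.
Qed.

Lemma G_all : forall t, G t.
Proof.
  assert (forall n t, (t <= n)%nat -> G t).
  { induction n as [|n IH]; intros t Ht.
    - assert (t = 0%nat) by lia. subst. apply G0.
    - destruct (Nat.le_gt_cases t 1) as [H1|H1].
      + destruct t as [|[|t]]; [apply G0| apply G1| lia].
      + destruct (Nat.Even_or_Odd t) as [[q Hq]|[q Hq]]; subst t.
        * apply G_even, IH. lia.
        * apply G_odd; apply IH; lia. }
  intros t. apply (H t t). lia.
Qed.
Definition mom (t p : nat) : R := zsum (fun j => delta j t * IZR j ^ p).
Lemma moment_mom : forall t p, moment t p = mom t p.
Proof.
  intros t p. unfold moment, mom, zsum, posp, negp. f_equal; apply Series_ext; intros n.
  - rewrite <- INR_IZR_INZ. reflexivity.
  - rewrite opp_IZR. rewrite <- INR_IZR_INZ. reflexivity.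
Qed.

Lemma mom_even : forall t p, mom (2*t) p = mom t p.
Proof. intros. unfold mom. apply zsum_ext. intros j. rewrite delta_even. reflexivity. Qed.
Lemma mom_odd : forall t p, mom (2*t+1) p =
  / 2 * zsum (fun j => delta j t * (IZR j + 1) ^ p) + / 2 * zsum (fun j => delta j (t+1) * (IZR j + -1) ^ p).
Proof.
  intros t p. unfold mom.
  rewrite (zsum_ext _ (fun j => / 2 * (delta (j-1) t * IZR j ^ p) + / 2 * (delta (j+1) (t+1) * IZR j ^ p))).
  2:{ intros j. rewrite delta_odd. unfold Rdiv. ring. }
  
  rewrite zsum_plus.
  2:{ apply zconv_scal. apply h1_conv. apply G_all. }
  2:{ apply zconv_scal. apply h2_conv. apply G_all. }
  
  rewrite !zsum_scal.  rewrite h1_sum by apply G_all. rewrite h2_sum by apply G_all. reflexivity.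
Qed.

Lemma zsum_lin4 : forall f0 f1 f2 f3 c0 c1 c2 c3, zconv f0 -> zconv f1 -> zconv f2 -> zconv f3 ->
  zsum (fun j => c0 * f0 j + c1 * f1 j + c2 * f2 j + c3 * f3 j)
  = c0 * zsum f0 + c1 * zsum f1 + c2 * zsum f2 + c3 * zsum f3.
Proof.
  intros f0 f1 f2 f3 c0 c1 c2 c3 H0 H1 H2 H3.
  assert (C0 := zconv_scal c0 f0 H0). assert (C1 := zconv_scal c1 f1 H1).
  assert (C2 := zconv_scal c2 f2 H2). assert (C3 := zconv_scal c3 f3 H3).
  rewrite (zsum_plus (fun j => c0 * f0 j + c1 * f1 j + c2 * f2 j) (fun j => c3 * f3 j)).
  2:{ apply zconv_plus; [apply zconv_plus|]; assumption. }
  2:{ exact C3. }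
  rewrite (zsum_plus (fun j => c0 * f0 j + c1 * f1 j) (fun j => c2 * f2 j)).
  2:{ apply zconv_plus; assumption. }
  2:{ exact C2. }
  rewrite (zsum_plus (fun j => c0 * f0 j) (fun j => c1 * f1 j)) by assumption.
  rewrite !zsum_scal. reflexivity.
Qed.

Definition mf (t i : nat) := fun j => delta j t * IZR j ^ i.

Lemma ps_gen : forall t a p c0 c1 c2 c3,
  (forall x : R, (x + a) ^ p = c0 * x ^ 0 + c1 * x ^ 1 + c2 * x ^ 2 + c3 * x ^ 3) ->
  zsum (fun j => delta j t * (IZR j + a) ^ p) = c0 * mom t 0 + c1 * mom t 1 + c2 * mom t 2 + c3 * mom t 3.
Proof.
  intros t a p c0 c1 c2 c3 Hx.
  rewrite (zsum_ext _ (fun j => c0 * mf t 0 j + c1 * mf t 1 j + c2 * mf t 2 j + c3 * mf t 3 j)).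
  2:{ intros j. unfold mf. rewrite Hx. ring. }
  rewrite zsum_lin4 by apply G_all. reflexivity.
Qed.

Lemma mom0_zero : forall p, mom 0 p = 0 ^ p.
Proof.
  intros p. unfold mom, zsum.
  destruct (ser_fin0 (posp (fun j => delta j 0 * IZR j ^ p))) as [_ E1].
  { intros n. unfold posp. rewrite delta0.
    replace (Z.eqb (Z.of_nat (S n)) 0) with false by (symmetry; apply Z.eqb_neq; lia). ring. }
  destruct (ser_fin0 (negp (fun j => delta j 0 * IZR j ^ p))) as [_ E2].
  { intros n. unfold negp. rewrite delta0.
    replace (Z.eqb (- Z.of_nat (S (S n))) 0) with false by (symmetry; apply Z.eqb_neq; lia). ring. }
  rewrite E1, E2. unfold posp, negp. rewrite !delta0. simpl. ring.
Qed.

Lemma mom_o0 : forall t, mom (2*t+1) 0 = /2 * mom t 0 + /2 * mom (t+1) 0.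
Proof. intros. rewrite mom_odd, !(ps_gen _ _ 0 1 0 0 0) by (intros; ring). ring. Qed.
Lemma mom_o1 : forall t, mom (2*t+1) 1 = /2 * (mom t 1 + mom t 0) + /2 * (mom (t+1) 1 - mom (t+1) 0).
Proof. intros. rewrite mom_odd, (ps_gen _ 1 1 1 1 0 0), (ps_gen _ (-1) 1 (-1) 1 0 0) by (intros; ring). ring. Qed.
Lemma mom_o2 : forall t, mom (2*t+1) 2 = /2 * (mom t 2 + 2 * mom t 1 + mom t 0) + /2 * (mom (t+1) 2 - 2 * mom (t+1) 1 + mom (t+1) 0).
Proof. intros. rewrite mom_odd, (ps_gen _ 1 2 1 2 1 0), (ps_gen _ (-1) 2 1 (-2) 1 0) by (intros; ring). ring. Qed.
Lemma mom_o3 : forall t, mom (2*t+1) 3 = /2 * (mom t 3 + 3 * mom t 2 + 3 * mom t 1 + mom t 0) + /2 * (mom (t+1) 3 - 3 * mom (t+1) 2 + 3 * mom (t+1) 1 - mom (t+1) 0).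
Proof. intros. rewrite mom_odd, (ps_gen _ 1 3 1 3 3 1), (ps_gen _ (-1) 3 (-1) 3 (-3) 1) by (intros; ring). ring. Qed.

Lemma mom01 : forall t, mom t 0 = 1 /\ mom t 1 = 0.
Proof.
  assert (B0 : mom 0 0 = 1 /\ mom 0 1 = 0) by (rewrite !mom0_zero; simpl; split; ring).
  assert (B1 : mom 1 0 = 1 /\ mom 1 1 = 0).
  { pose proof (mom_o0 0) as E0. pose proof (mom_o1 0) as E1.
    change (2*0+1)%nat with 1%nat in E0, E1. change (0+1)%nat with 1%nat in E0, E1.
    destruct B0 as [B00 B01]. rewrite B00 in E0, E1. rewrite B01 in E1.
    assert (mom 1 0 = 1) by lra. split; [auto|]. rewrite H in E1. lra. }
  assert (forall n t, (t <= n)%nat -> mom t 0 = 1 /\ mom t 1 = 0).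
  { induction n as [|n IH]; intros t Ht.
    - assert (t = 0%nat) by lia. subst. exact B0.
    - destruct (Nat.le_gt_cases t 1) as [H1|H1].
      + destruct t as [|[|t]]; [exact B0| exact B1| lia].
      + destruct (Nat.Even_or_Odd t) as [[q Hq]|[q Hq]]; subst t.
        * rewrite !mom_even. apply IH. lia.
        * rewrite mom_o0, mom_o1. destruct (IH q ltac:(lia)) as [A0 A1].
          destruct (IH (q+1)%nat ltac:(lia)) as [C0 C1]. rewrite A0, A1, C0, C1. split; lra. }
  intros t. apply (H t t). lia.
Qed.

Lemma kappa2_mom : forall t, kappa 2 t = mom t 2.
Proof.
  intros t. unfold kappa, cumulant. cbn [cumul_upto Nat.leb rsum Nat.sub].
  rewrite !moment_mom. destruct (mom01 t) as [A B]. rewrite A, B. field.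
Qed.

Lemma kappa3_mom : forall t, kappa 3 t = mom t 3.
Proof.
  intros t. unfold kappa, cumulant. cbn [cumul_upto Nat.leb rsum Nat.sub].
  rewrite !moment_mom. destruct (mom01 t) as [A B]. rewrite A, B. field.
Qed.

Lemma m2_odd : forall t, mom (2*t+1) 2 = (mom t 2 + mom (t+1) 2) / 2 + 1.
Proof.
  intros t. rewrite mom_o2. destruct (mom01 t) as [A B]. destruct (mom01 (t+1)) as [C D].
  rewrite A, B, C, D. field.
Qed.

Lemma m3_odd : forall t, mom (2*t+1) 3 = (mom t 3 + mom (t+1) 3) / 2 + 3 / 2 * (mom t 2 - mom (t+1) 2).
Proof.
  intros t. rewrite mom_o3. destruct (mom01 t) as [A B]. destruct (mom01 (t+1)) as [C D].
  rewrite A, B, C, D. field.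
Qed.

Lemma mom_pow2 : forall k v p, mom (2 ^ k * v) p = mom v p.
Proof.
  induction k as [|k IH]; intros v p.
  - simpl. rewrite Nat.add_0_r. reflexivity.
  - rewrite Nat.pow_succ_r', <- Nat.mul_assoc, mom_even. apply IH.
Qed.

Lemma u_succ : forall k t, (2 ^ (S k + 1) * t + 2 ^ S k - 1 = 2 * (2 ^ (k + 1) * t + 2 ^ k - 1) + 1)%nat.
Proof.
  intros k t. replace (S k + 1)%nat with (S (S k)) by lia. replace (k + 1)%nat with (S k) by lia.
  rewrite !Nat.pow_succ_r'.
  pose proof (Nat.pow_nonzero 2 k ltac:(lia)). set (P := (2 ^ k)%nat) in *. nia.
Qed.

Lemma u_plus1 : forall k t, (2 ^ (k + 1) * t + 2 ^ k - 1 + 1 = 2 ^ k * (2 * t + 1))%nat.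
Proof.
  intros k t. replace (k + 1)%nat with (S k) by lia. rewrite !Nat.pow_succ_r'.
  pose proof (Nat.pow_nonzero 2 k ltac:(lia)). set (P := (2 ^ k)%nat) in *. nia.
Qed.

Lemma u_zero : forall t, (2 ^ (0 + 1) * t + 2 ^ 0 - 1 = 2 * t)%nat.
Proof. intros. simpl. lia. Qed.

Lemma main_mom : forall t k,
  let a := mom t 2 in let b := mom (t+1)%nat 2 in
  let c := mom t 3 in let d := mom (t+1)%nat 3 in
  let u := (2 ^ (k + 1) * t + 2 ^ k - 1)%nat in
  mom u 2 = (2 ^ k + 1) * a / 2 ^ (k + 1) + (2 ^ k - 1) * b / 2 ^ (k + 1) + 3 * (2 ^ k - 1) / 2 ^ k
  /\ mom u 2 - mom u 3 / 3 = (2 ^ k + 1) / 2 ^ (k + 1) * (a - c / 3)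
      + (2 ^ k - 1) / 2 ^ (k + 1) * (b - d / 3)
      + (1 / 2 + (INR k - 1) / 2 ^ (k + 1)) * (b - a)
      + 1 + (3 * INR k - 1) / 2 ^ k.
Proof.
  intros t k. induction k as [|k IH]; intros a b c d u.
  - unfold u. rewrite u_zero, !mom_even. fold a c. simpl. split; field.
  - cbv zeta in IH. destruct IH as [IH1 IH2]. unfold u. rewrite u_succ.
    rewrite m2_odd, m3_odd, u_plus1, !mom_pow2, m2_odd, m3_odd.
    fold a b c d in IH1. fold a b c d in IH2. fold a b c d. rewrite IH1. rewrite IH1 in IH2.
    set (A3 := mom (2 ^ (k + 1) * t + 2 ^ k - 1) 3) in *.
    assert (HA3 : forall L R0, L - A3 / 3 = R0 -> A3 = 3 * (L - R0)) by (intros L R0 HL; rewrite <- HL; field).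
    specialize (HA3 _ _ IH2). rewrite HA3.
    rewrite S_INR, !pow_add. simpl pow.
    assert (0 < 2 ^ k) by (apply pow_lt; lra).
    split; field; lra.
Qed.

Theorem lemma2p10 (t k : nat) :
  kappa 2 (2 ^ (k + 1) * t + 2 ^ k - 1)%nat
    = (2 ^ k + 1) * kappa 2 t / 2 ^ (k + 1)
      + (2 ^ k - 1) * kappa 2 (t + 1)%nat / 2 ^ (k + 1)
      + 3 * (2 ^ k - 1) / 2 ^ k
  /\
  Dfun (2 ^ (k + 1) * t + 2 ^ k - 1)%nat
    = (2 ^ k + 1) / 2 ^ (k + 1) * Dfun t
      + (2 ^ k - 1) / 2 ^ (k + 1) * Dfun (t + 1)%nat
      + (1 / 2 + (INR k - 1) / 2 ^ (k + 1)) * (kappa 2 (t + 1)%nat - kappa 2 t)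
      + 1 + (3 * INR k - 1) / 2 ^ k.
Proof.
  unfold Dfun. rewrite !kappa2_mom, !kappa3_mom. exact (main_mom t k).
Qed.
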